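(* Let $\mathsf{T}$ be a rooted plane tree, let $k\geq 0$ be an integer, and let $\delta\in\mathsf{Pop}^k(\mathcal{O}(\mathsf{T}))$. For all $v\in\mathsf{T}$ and all $u\in\delta(v)$, we have $\mathrm{rk}_v(u)\geq k$.
   Context: A rooted plane tree $\mathsf{T}$ is a finite tree with a distinguished root, regarded as a poset $\leq_\mathsf{T}$ in which $v'\leq_\mathsf{T} v$ iff $v$ lies on the path from $v'$ to the root. $\Delta_\mathsf{T}(v)=\{v':v'\leq_\mathsf{T} v\}$; a leaf is a node covering nothing. $\mathcal{M}_\mathsf{T}$ is the set of maximal chains (leaf-to-root paths). For $C\in\mathcal{M}_\mathsf{T}$ and $v\in C$: $\mathrm{height}_C(v)$ is the number of elements of $C$ strictly below $v$; if $v$ is not a leaf, $\mathrm{ch}_C(v)$ is the element of $C$ covered by $v$; $b_C(v)=|\Delta_\mathsf{T}(v)|-\mathrm{height}_C(v)-1$; $f_C(v)=0$ if $v$ is a leaf, and otherwise with $w=\mathrm{ch}_C(v)$, $f_C(v)=f_C(w)+1$ if $f_C(w)+1\leq b_C(w)$ and $f_C(v)=f_C(w)$ otherwise. For $v\in\mathsf{T}$, the tree $\mathsf{T}^*_v$ is obtained from $\mathsf{T}$ by attaching, below the leaf of each maximal chain $C\in\mathcal{M}_\mathsf{T}$ containing $v$, a new chain of $f_C(v)$ nodes. For a rooted tree, the height of a node $u$ is the maximum length (number of elements minus one) of a chain of nodes lying weakly below $u$. The $v$-rank of $u\in\mathsf{T}$ is $\mathrm{rk}_v(u)=-1$ if $u\not\leq_\mathsf{T}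 v$, $\mathrm{rk}_v(u)=\infty$ if $u=v$, and otherwise $\mathrm{rk}_v(u)$ is the height of $u$ in $\mathsf{T}^*_v$. An ornament is a nonempty set of nodes inducing a connected subgraph; an ornamentation is a map $\delta$ from nodes to ornaments such that the maximal element of $\delta(v)$ is $v$ and any two sets $\delta(v),\delta(v')$ are nested or disjoint. $\mathcal{O}(\mathsf{T})$ is the set of ornamentations ordered by pointwise inclusion (a lattice with meet given by pointwise intersection), and $\mathsf{Pop}(\delta)=\bigwedge(\{\delta\}\cup\{\delta':\delta'\lessdot\delta\})$; $\mathsf{Pop}^k$ is the $k$-th iterate. *)

(* Defs.v *)
From mathcomp Require Import all_boot.
Set Implicit Arguments. Unset Strict Implicit. Unset Printing Implicit Defensive.

(* A finite rooted tree on the node type T, given by its parent map: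
   [par root = root] and every node reaches the root by iterating [par].
   (The plane structure, i.e. the order of children, plays no role in the
   statement and is not recorded.) *)
Record rtree (T : finType) := RTree {
  root : T;
  par : T -> T;
  par_root : par root = root;
  reach_root : forall v, fconnect par v root }.

Section Tree.
Variables (T : finType) (par : T -> T).

Definition tle (v' v : T) : bool := fconnect par v' v.

Definition Delta (v : T) : {set T} := [set w | tle w v].

(* leaf : covers nothing (the root is the only fixed point of par) *)
Definition is_leaf (v : T) : bool := [forall w, (par w == v) ==> (w == v)].

(* number of parent steps from w up to u (when w <= u) *)
Definition dist (w u : T) : nat := index u (traject par w #|T|).

Definition height (u : T) : nat := \max_(w | tle w u) dist w u.

(* Maximal chains are indexed by their leaf l: C_l = [set w | tle l w]. *)
Definition chain (l : T) : {set T} := [set w | tle l w].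

Definition heightC (l v : T) : nat :=
  #|[set w | (w \in chain l) && tle w v && (w != v)]|.

Definition bC (l v : T) : nat := #|Delta v| - heightC l v - 1.

(* f along the chain C_l, indexed by position i (node iter i par l);
   position 0 is the leaf l, and the child of position i.+1 is position i. *)
Fixpoint fseq (l : T) (i : nat) : nat :=
  match i with
  | 0 => 0
  | i'.+1 => let w := iter i' par l in
             if fseq l i' + 1 <= bC l w then fseq l i' + 1 else fseq l i'
  end.

Definition fC (l v : T) : nat := fseq l (heightC l v).

Definition tree_edge_in (S : {set T}) : rel T :=
  [rel x y | [&& x \in S, y \in S &
     ((par x == y) && (x != y)) || ((par y == x) && (y != x))]].

Definition ornament (S : {set T}) : bool :=
  (S != set0) && [forall x in S, forall y in S, connect (tree_edge_in S) x y].

Definition is_ornamentation (d : {ffun T -> {set T}}) : bool :=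
  [forall v, ornament (d v)]
  && [forall v, (v \in d v) && [forall w in d v, tle w v]]
  && [forall v, forall v', (d v \subset d v') || (d v' \subset d v)
                          || [disjoint d v & d v']].

Definition orn_le (d1 d2 : {ffun T -> {set T}}) : bool :=
  [forall v, d1 v \subset d2 v].
Definition orn_lt (d1 d2 : {ffun T -> {set T}}) : bool :=
  orn_le d1 d2 && (d1 != d2).

Definition orn_covered (d' d : {ffun T -> {set T}}) : bool :=
  [&& is_ornamentation d', orn_lt d' d &
   [forall d'' : {ffun T -> {set T}},
      ~~ [&& is_ornamentation d'', orn_lt d' d'' & orn_lt d'' d]]].

(* Pop(d) = meet (pointwise intersection) of d and all elements it covers *)
Definition Pop (d : {ffun T -> {set T}}) : {ffun T -> {set T}} :=
  [ffun v => d v :&: \bigcap_(d' | orn_covered d' d) d' v].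

Definition in_Popk (k : nat) (d : {ffun T -> {set T}}) : Prop :=
  exists d0, is_ornamentation d0 /\ d = iter k Pop d0.

(* The tree T*_v: below the leaf l of every maximal chain containing v,
   attach a new chain of f_{C_l}(v) nodes. *)
Definition ext (v l : T) : nat :=
  if is_leaf l && tle l v then fC l v else 0.

Definition Tstar (v : T) : finType := (T + {l : T & 'I_(ext v l)})%type.

Definition par_star (v : T) (x : Tstar v) : Tstar v :=
  match x with
  | inl y => inl (par y)
  | inr (existT l i) =>
      match i with
      | Ordinal 0 _ => inl l
      | Ordinal n.+1 H => inr (existT _ l (Ordinal (ltnW H)))
      end
  end.

End Tree.

(* values of the v-rank: -1, a natural number, or infinity *)
Inductive rank := RNeg | RFin of nat | RInf.

Definition rank_ge (r : rank) (k : nat) : bool :=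
  match r with RNeg => false | RFin n => k <= n | RInf => true end.

Definition rk (T : finType) (par : T -> T) (v u : T) : rank :=
  if ~~ tle par u v then RNeg
  else if u == v then RInf
  else RFin (height (@par_star T par v) (inl u)).

(* Main.v *)
Require Import Defs.
From mathcomp Require Import all_boot zify.
Set Implicit Arguments. Unset Strict Implicit. Unset Printing Implicit Defensive.

Lemma iter_depthD (X : Type) (f : X -> X) (D : X -> nat) :
  (forall x, D (f x) = (D x).-1) -> forall n x, D (iter n f x) = D x - n.
Proof.
move=> Df; elim=> [|n IH] x /=; first by rewrite subn0.
by rewrite Df IH subnS.
Qed.

Lemma dist_depth (X : finType) (f : X -> X) (D : X -> nat) :
  (forall x, D (f x) = (D x).-1) ->
  forall w u, fconnect f w u -> 0 < D u -> dist f w u = D w - D u.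
Proof.
move=> Df w u wu Du.
have ho : order f w <= #|X| by apply: max_card.
have hn := findex_max wu.
have hi := iter_findex wu.
set n := findex f w u in hn hi.
have nN : n < #|X| by apply: leq_trans hn ho.
have uin : u \in traject f w #|X|.
  by rewrite -hi -(nth_traject f nN); apply: mem_nth; rewrite size_traject.
have ilt : index u (traject f w #|X|) < #|X|.
  by rewrite -{2}(size_traject f w #|X|) index_mem.
have := nth_index w uin; rewrite nth_traject // => e.
rewrite /dist; have := iter_depthD Df (index u (traject f w #|X|)) w.
rewrite e => {}e; rewrite e in Du *.
by rewrite subKn // ltnW // -subn_gt0.
Qed.
Section TreeFacts.
Variables (T : finType) (t : rtree T).
Local Notation p := (Defs.par t).
Local Notation r := (Defs.root t).
Local Notation tle := (Defs.tle p).

Lemma ex_root x : exists n, iter n p x == r.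
Proof. by exists (findex p x r); rewrite iter_findex // reach_root. Qed.

Definition depth x := ex_minn (ex_root x).

Lemma iter_depth x : iter (depth x) p x = r.
Proof. rewrite /depth; case: ex_minnP => n /eqP //. Qed.

Lemma depth_min x n : iter n p x = r -> depth x <= n.
Proof. rewrite /depth; case: ex_minnP => m _ H /eqP /H //. Qed.

Lemma iter_root n : iter n p r = r.
Proof. by elim: n => //= n ->; rewrite par_root. Qed.

Lemma depth_root : depth r = 0.
Proof. by apply/eqP; rewrite -leqn0; apply: depth_min. Qed.

Lemma depth0 x : depth x = 0 -> x = r.
Proof. by move=> h; have := iter_depth x; rewrite h. Qed.

Lemma depth_par x : depth (p x) = (depth x).-1.
Proof.
have [->|xr] := eqVneq x r; first by rewrite par_root depth_root.
have dx : 0 < depth x by rewrite lt0n; apply/eqP => /depth0 /eqP; rewrite (negbTE xr).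
apply/eqP; rewrite eqn_leq; apply/andP; split.
  apply: depth_min; rewrite -iterSr prednK //; exact: iter_depth.
rewrite -ltnS prednK //; apply: depth_min; rewrite iterSr; exact: iter_depth.
Qed.

Lemma depth_iter n x : depth (iter n p x) = depth x - n.
Proof. exact: (iter_depthD depth_par). Qed.

Lemma tle_iterP a b : reflect (exists n, iter n p a = b) (tle a b).
Proof.
apply: (iffP idP).
  by move=> h; exists (findex p a b); rewrite iter_findex.
by case=> n <-; apply: fconnect_iter.
Qed.

Lemma tle_iter a b : tle a b -> iter (depth a - depth b) p a = b.
Proof.
case/tle_iterP=> n e.
have [b0|bpos] := posnP (depth b).
  rewrite b0 subn0 iter_depth; rewrite (depth0 b0) //.
have e2 := depth_iter n a; rewrite e in e2.
have : n <= depth a by move: bpos; rewrite e2 subn_gt0 => /ltnW.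
by move=> h; rewrite e2 subKn.
Qed.

Lemma tle_refl a : tle a a.
Proof. exact: connect0. Qed.

Lemma tle_trans a b c : tle a b -> tle b c -> tle a c.
Proof. exact: connect_trans. Qed.

Lemma tle_par a : tle a (p a).
Proof. exact: (fconnect_iter p 1 a). Qed.

Lemma tle_root a : tle a r.
Proof. exact: reach_root. Qed.

Lemma tle_depth a b : tle a b -> depth b <= depth a.
Proof. by move/tle_iter <-; rewrite depth_iter leq_subr. Qed.

Lemma tle_anti a b : tle a b -> tle b a -> a = b.
Proof.
move=> ab ba; have e : depth a = depth b by apply/eqP; rewrite eqn_leq !tle_depth.
by have := tle_iter ab; rewrite e subnn.
Qed.

Lemma tle_lt a b : tle a b -> a != b -> depth b < depth a.
Proof.
move=> ab; rewrite ltn_neqAle tle_depth // andbT; apply: contra => /eqP e.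
by have := tle_iter ab; rewrite e subnn => /= ->.
Qed.

Lemma tle_step a b : tle a b -> a != b -> tle (p a) b.
Proof.
move=> ab nab; have := tle_iter ab; have := tle_lt ab nab.
rewrite -subn_gt0; case: (depth a - depth b) => // n _.
by rewrite iterSr => <-; apply: fconnect_iter.
Qed.

Lemma tle_total a b c : tle a b -> tle a c -> tle b c || tle c b.
Proof.
case/tle_iterP=> i <-; case/tle_iterP=> j <-.
case: (leqP i j) => h.
  by apply/orP; left; apply/tle_iterP; exists (j - i); rewrite -iterD subnK.
by apply/orP; right; apply/tle_iterP; exists (i - j); rewrite -iterD subnK // ltnW.
Qed.

Lemma tle_from_root b : tle r b -> b = r.
Proof. by case/tle_iterP=> n <-; rewrite iter_root. Qed.

Lemma between_par c x : tle c x -> tle x (p c) -> x = c \/ x = p c.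
Proof.
move=> cx xpc; have [->|ncx] := eqVneq c x; first by left.
by right; apply: tle_anti => //; apply: tle_step.
Qed.

Lemma child_exists a b : tle a b -> a != b ->
  exists c, [/\ tle a c, p c = b & c != b].
Proof.
move=> ab nab; have lt := tle_lt ab nab; have e := tle_iter ab.
exists (iter (depth a - depth b).-1 p a); split.
- exact: fconnect_iter.
- by rewrite -iterS prednK // subn_gt0.
- apply/eqP=> h; have := congr1 depth h; rewrite depth_iter.
  move: lt; rewrite -subn_gt0; move: (depth a - depth b) (depth a) (depth b) => m da db.
  by move=> m0; rewrite -subn1 subnBA // => /eqP; lia.
Qed.

Lemma card_seg a b : tle a b -> #|[set w | tle a w && tle w b]| = (depth a - depth b).+1.
Proof.
move Hn : (depth a - depth b) => n; elim: n a Hn => [|n IH] a Hn ab.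
  have e := tle_iter ab; rewrite Hn /= in e; subst b.
  rewrite (_ : [set w | tle a w && tle w a] = [set a]) ?cards1 //.
  apply/setP=> w; rewrite !inE.
  by apply/andP/eqP => [[h1 h2]|->]; [apply/esym/tle_anti|rewrite tle_refl].
have nab : a != b by apply/eqP => e; move: Hn; rewrite e subnn.
have pab := tle_step ab nab.
have Hn' : depth (p a) - depth b = n by rewrite depth_par; lia.
have e : [set w | tle a w && tle w b] = a |: [set w | tle (p a) w && tle w b].
  apply/setP=> w; rewrite !inE; apply/andP/orP.
    case=> aw wb; have [->|naw] := eqVneq w a; first by left.
    right; apply/andP; split => //.
    have := tle_total (tle_par a) aw; case/orP=> // h.
    case: (between_par aw h) => e'; first by rewrite e' eqxx in naw.
    by rewrite e' tle_refl.
  case=> [/eqP->|/andP[h1 h2]]; first by rewrite tle_refl.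
  by split=> //; apply: tle_trans (tle_par a) h1.
rewrite e cardsU1 IH // !inE.
suff -> : tle (p a) a = false by [].
apply/negP=> h; have := tle_anti (tle_par a) h => e2.
have : depth (p a) = depth a by rewrite -e2.
rewrite depth_par => h'; have := tle_lt ab nab; lia.
Qed.


Lemma leaf_below u : exists2 l, is_leaf p l & tle l u.
Proof.
case: (@arg_maxnP _ u (fun x => tle x u) depth (tle_refl u)) => l lu lmax.
exists l => //; apply/forallP => w; apply/implyP => /eqP pw.
apply/negPn/negP => nwl.
have wl : tle w l by rewrite -pw tle_par.
have := lmax w (tle_trans wl lu); have := tle_lt wl nwl; lia.
Qed.

Lemma heightC_depth l v : tle l v -> heightC p l v = depth l - depth v.
Proof.
move=> lv; rewrite /heightC.
have := card_seg lv; rewrite (cardsD1 v) !inE tle_refl lv /= add1n => -[<-].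
apply: eq_card => w; rewrite !inE; by case: (w != v); rewrite ?andbT ?andbF.
Qed.

Lemma iter_heightC l v : tle l v -> iter (heightC p l v) p l = v.
Proof. by move=> lv; rewrite heightC_depth // tle_iter. Qed.

Definition good (d : {ffun T -> {set T}}) : Prop :=
  [/\ forall v, v \in d v,
      forall v w, w \in d v -> tle w v,
      forall v w, w \in d v -> w != v -> p w \in d v &
      forall v v', (d v \subset d v') || (d v' \subset d v) || [disjoint d v & d v']].

Lemma tree_edge_sym (S : {set T}) : symmetric (tree_edge_in p S).
Proof.
move=> x y; rewrite /tree_edge_in /=.
by case: (x \in S); case: (y \in S) => //=; rewrite orbC.
Qed.

Lemma ornament_closed (S : {set T}) v : ornament p S -> v \in S -> (forall w, w \in S -> tle w v) ->
  forall w, w \in S -> w != v -> p w \in S.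
Proof.
case/andP=> _ /forallP conn vS Sv w wS nwv.
have := conn w; rewrite wS /= => /forallP /(_ v); rewrite vS /= => /connectP [pth pp lst].
have key : forall pth z, path (tree_edge_in p S) z pth -> tle z w ->
    ~~ tle (last z pth) w -> p w \in S.
  elim=> [|y pth' IH] z /=; first by move=> _ ->.
  case/andP=> ezy pth'p zw nl.
  have [yw|nyw] := boolP (tle y w); first exact: IH pth'p yw nl.
  move: ezy; rewrite /tree_edge_in /= => /and3P [zS yS /orP [/andP [/eqP pz _]|/andP [/eqP py _]]].
    have [ezw|nzw] := eqVneq z w; first by rewrite -ezw pz.
    by move: nyw; rewrite -pz tle_step.
  by move: nyw; rewrite (tle_trans _ zw) // -py tle_par.
apply: (key pth w pp (tle_refl w)); rewrite -lst; apply/negP => vw.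
by move: nwv; rewrite (tle_anti (Sv w wS) vw) eqxx.
Qed.

Lemma connect_up (S : {set T}) v : v \in S -> (forall w, w \in S -> tle w v) ->
  (forall w, w \in S -> w != v -> p w \in S) ->
  forall w, w \in S -> connect (tree_edge_in p S) w v.
Proof.
move=> vS Sv Scl w; move Hn : (depth w - depth v) => n.
elim: n w Hn => [|n IH] w Hn wS.
  have := tle_iter (Sv w wS); rewrite Hn /= => ->; exact: connect0.
have nwv : w != v by apply/eqP => e; move: Hn; rewrite e subnn.
have pwS := Scl w wS nwv.
have pw : p w != w.
  apply/eqP => e; have h := depth_par w; rewrite e in h; have := tle_lt (Sv w wS) nwv; lia.
apply: connect_trans (IH (p w) _ pwS); last first.
  by rewrite depth_par; move: Hn; have := tle_lt (Sv w wS) nwv; lia.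
by apply: connect1; rewrite /tree_edge_in /= wS pwS eqxx eq_sym pw.
Qed.

Lemma orn_good d : is_ornamentation p d -> good d.
Proof.
case/andP => [/andP [/forallP orn /forallP mx] /forallP nest].
have vin : forall v, v \in d v by move=> v; case/andP: (mx v).
have le : forall v w, w \in d v -> tle w v.
  by move=> v w; case/andP: (mx v) => _ /forallP /(_ w) /implyP.
split => //.
  by move=> v w wd nwv; apply: (ornament_closed (orn v) (vin v) (le v)).
by move=> v v'; have /forallP := nest v; apply.
Qed.

Lemma good_orn d : good d -> is_ornamentation p d.
Proof.
case=> vin le cl nest; apply/andP; split; first (apply/andP; split).
- apply/forallP => v; apply/andP; split.
    by apply/set0Pn; exists v.
  apply/forallP => x; apply/implyP => xS; apply/forallP => y; apply/implyP => yS.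
  apply: connect_trans (connect_up (vin v) (le v) (cl v) xS) _.
  rewrite (sym_connect_sym (@tree_edge_sym (d v))); exact: (connect_up (vin v) (le v) (cl v) yS).
- apply/forallP => v; rewrite vin /=; apply/forallP => w; apply/implyP; exact: le.
- by apply/forallP => v; apply/forallP => v'.
Qed.


Lemma disjP (A B : {set T}) : reflect (forall x, x \in A -> x \in B -> False) [disjoint A & B].
Proof.
rewrite disjoints_subset; apply: (iffP subsetP) => H x.
  by move=> xA xB; have := H x xA; rewrite inE xB.
by move=> xA; rewrite inE; apply/negP => xB; apply: (H x).
Qed.

Definition nested (A B : {set T}) :=
  (A \subset B) || (B \subset A) || [disjoint A & B].

Lemma nested_sym A B : nested A B = nested B A.
Proof. by rewrite /nested disjoint_sym; case: (A \subset B); case: (B \subset A). Qed.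

Lemma good_up d v u x : good d -> u \in d v -> tle u x -> tle x v -> x \in d v.
Proof.
case=> vin le cl _ uv ux xv; have e := tle_iter ux; rewrite -e in xv *.
elim: (depth u - depth x) xv => [|n IH] //= xv.
have h1 : tle (iter n p u) v := tle_trans (tle_par _) xv.
have := IH h1; have [e'|ne] := eqVneq (iter n p u) v => hin.
  by rewrite e' in xv *; rewrite (tle_anti xv (tle_par v)).
exact: cl.
Qed.

Lemma good_nest d v v' x : good d -> x \in d v -> x \in d v' -> tle v v' -> d v \subset d v'.
Proof.
case=> vin le cl nest xv xv' vv'.
move: (nest v v') => /orP [/orP [//|h]|h].
  have := tle_anti vv' (le _ _ (subsetP h _ (vin v'))) => ->; exact: subxx.
by have := disjP _ _ h x xv xv'.
Qed.

Lemma PopE d v x : (x \in Pop p d v) =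
  (x \in d v) && [forall d', orn_covered p d' d ==> (x \in d' v)].
Proof.
rewrite /Pop ffunE inE; congr (_ && _).
apply/bigcapP/forallP => [H d'|H d' cov]; first by apply/implyP => /H.
by move/implyP: (H d'); apply.
Qed.

Lemma Pop_sub d v x : x \in Pop p d v -> x \in d v.
Proof. by rewrite PopE => /andP []. Qed.

Lemma Pop_cov d d' v x : orn_covered p d' d -> x \in Pop p d v -> x \in d' v.
Proof. by move=> c; rewrite PopE => /andP [_ /forallP /(_ d') /implyP]; apply. Qed.

Lemma cov_good d d' : orn_covered p d' d -> good d'.
Proof. by case/and3P => /orn_good. Qed.

Lemma good_Pop d : good d -> good (Pop p d).
Proof.
move=> gd; have [vin le cl nest] := gd.
have inPop : forall v x, x \in d v -> (forall d', orn_covered p d' d -> x \in d' v) ->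
    x \in Pop p d v.
  move=> v x h1 h2; rewrite PopE h1 /=; apply/forallP => d'; apply/implyP; exact: h2.
split.
- move=> v; apply: inPop => // d' /cov_good [] //.
- by move=> v w /Pop_sub; apply: le.
- move=> v w wP nwv; apply: inPop; first by apply: cl => //; apply: Pop_sub wP.
  move=> d' c; have [_ _ cl' _] := cov_good c; apply: cl' nwv.
  exact: Pop_cov c wP.
- move=> v v'.
  case: (pickP (fun x => (x \in Pop p d v) && (x \in Pop p d v'))) => [x /andP [xv xv']|none]; last first.
    by apply/orP; right; apply/disjP => y yv yv'; have := none y; rewrite yv yv'.
  have sub : forall a b, x \in Pop p d a -> x \in Pop p d b -> tle a b -> Pop p d a \subset Pop p d b.
    move=> a b xa xb ab; apply/subsetP => y ya; apply: inPop.
      apply: subsetP (good_nest gd (Pop_sub xa) (Pop_sub xb) ab) _ _; exact: Pop_sub ya.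
    move=> d' c; apply: subsetP (good_nest (cov_good c) (Pop_cov c xa) (Pop_cov c xb) ab) _ _.
    exact: Pop_cov c ya.
  have := tle_total (le _ _ (Pop_sub xv)) (le _ _ (Pop_sub xv')).
  by case/orP => h; [rewrite (sub v v') | rewrite (sub v' v) ?orbT].
Qed.


Lemma block_removed d v tt : good d -> tt \in d v -> tt != v ->
  (forall x, tt \in d x -> tle x v -> x = tt \/ x = v) ->
  (forall y, y \in d v -> tle y tt -> y \in d tt) ->
  forall y, y \in d tt -> y \notin Pop p d v.
Proof.
move=> gd tv ntv top comp.
have [vin le cl nest] := gd.
have vtt : v \notin d tt.
  by apply/negP => /le vt; move: ntv; rewrite (tle_anti vt (le _ _ tv)) eqxx.
pose d' := [ffun x => if x == v then d v :\: d tt else d x].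
have d'v : d' v = d v :\: d tt by rewrite ffunE eqxx.
have d'x : forall x, x != v -> d' x = d x by move=> x nx; rewrite ffunE (negbTE nx).
have key : forall x, x != v -> nested (d v :\: d tt) (d x).
  move=> x nx; case/orP: (nest v x) => [/orP [h|h]|h].
  - by apply/orP; left; apply/orP; left; apply: subset_trans (subsetDl _ _) h.
  - case/orP: (nest x tt) => [/orP [h2|h2]|h2].
    + apply/orP; right; apply/disjP => y /setDP [_ ytt] yx.
      by rewrite (subsetP h2 _ yx) in ytt.
    + have xv : tle x v by apply: le; apply: (subsetP h); apply: vin.
      case: (top x (subsetP h2 _ (vin tt)) xv) => e; last by rewrite e eqxx in nx.
      subst x; apply/orP; right; apply/disjP => y /setDP [_ ytt] yx.
      by rewrite yx in ytt.
    + apply/orP; left; apply/orP; right; apply/subsetP => y yx.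
      rewrite inE (subsetP h _ yx) andbT; apply/negP => ytt; exact: (disjP _ _ h2 y yx ytt).
  - apply/orP; right; apply/disjP => y /setDP [yv _] yx; exact: (disjP _ _ h y yv yx).
have gd' : good d'.
  split.
  - move=> x; case: (eqVneq x v) => [->|nx]; first by rewrite d'v inE vin vtt.
    by rewrite d'x.
  - move=> x w; case: (eqVneq x v) => [->|nx]; last by rewrite d'x //; apply: le.
    by rewrite d'v inE => /andP [_]; apply: le.
  - move=> x w; case: (eqVneq x v) => [->|nx]; last by rewrite d'x //; apply: cl.
    rewrite d'v !inE => /andP [wtt wv] nwv; rewrite (cl v w wv nwv) andbT.
    apply/negP => ptt; move/negP: wtt; apply; apply: comp wv _.
    exact: tle_trans (tle_par w) (le _ _ ptt).
  - move=> x x'; case: (eqVneq x v) => [->|nx]; case: (eqVneq x' v) => [->|nx'].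
    + by rewrite d'v subxx.
    + by rewrite d'v d'x //; apply: key.
    + by rewrite d'v d'x // -/(nested _ _) nested_sym; apply: key.
    + by rewrite !d'x //; apply: nest.
have cov : orn_covered p d' d.
  apply/and3P; split.
  - exact: good_orn.
  - apply/andP; split.
      apply/forallP => x; case: (eqVneq x v) => [->|nx]; last by rewrite d'x.
      by rewrite d'v; apply: subsetDl.
    apply/eqP => e; have := congr1 (fun f : {ffun T -> {set T}} => tt \in f v) e.
    by rewrite /= d'v inE tv (vin tt).
  - apply/forallP => d''; apply/negP => /and3P [o'' /andP [le1 ne1] /andP [le2 ne2]].
    have [vin'' le'' cl'' nest''] := orn_good o''.
    have sub1 : forall x, d' x \subset d'' x by move=> x; move/forallP: le1; apply.
    have sub2 : forall x, d'' x \subset d x by move=> x; move/forallP: le2; apply.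
    have ex : forall x, x != v -> d'' x = d x.
      by move=> x nx; apply/eqP; rewrite eqEsubset sub2 /= -(d'x x nx) sub1.
    have d''tt : d'' tt = d tt := ex tt ntv.
    case/orP: (nest'' v tt) => [/orP [h|h]|h].
    + by move: vtt; rewrite -d''tt (subsetP h _ (vin'' v)).
    + move/eqP: ne2; apply; apply/ffunP => x; case: (eqVneq x v) => [->|nx]; last exact: ex.
      apply/eqP; rewrite eqEsubset sub2 /=; apply/subsetP => y yv.
      have [ytt|nytt] := boolP (y \in d tt).
        by rewrite -d''tt in ytt; exact: (subsetP h _ ytt).
      by apply: (subsetP (sub1 v)); rewrite d'v inE nytt.
    + move/eqP: ne1; apply; apply/ffunP => x; case: (eqVneq x v) => [->|nx]; last by rewrite ex // d'x.
      apply/eqP; rewrite eqEsubset sub1 /= d'v; apply/subsetP => y yv.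
      rewrite inE (subsetP (sub2 v) _ yv) andbT; apply/negP => ytt.
      by rewrite -d''tt in ytt; exact: (disjP _ _ h y yv ytt).
move=> y ytt; apply/negP => yP; have := Pop_cov cov yP; by rewrite d'v inE ytt.
Qed.


Definition toplev (d : {ffun T -> {set T}}) v tt := [&& tt \in d v, tt != v &
  [forall x, (tt \in d x) && tle x v ==> (x == tt) || (x == v)]].

Lemma toplevP d v tt : toplev d v tt ->
  forall x, tt \in d x -> tle x v -> x = tt \/ x = v.
Proof.
case/and3P=> _ _ /forallP H x h1 h2; move/implyP: (H x); rewrite h1 h2 => /(_ isT).
by case/orP => /eqP; [left|right].
Qed.

Lemma top_exists d v u : good d -> u \in d v -> u != v ->
  exists tt, [/\ tle u tt, u \in d tt & toplev d v tt].
Proof.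
move=> gd uv nuv; have [vin le cl nest] := gd.
pose P x := [&& tle u x, tle x v, x != v & u \in d x].
have Pu : P u by rewrite /P tle_refl (le _ _ uv) nuv vin.
case: (@arg_minnP _ u P depth Pu) => tt /and4P [utt ttv nttv utt'] tmin.
exists tt; split => //; apply/and3P; split => //.
  exact: good_up gd uv utt ttv.
apply/forallP => x; apply/implyP => /andP [ttx xv].
have [->|nxv] := eqVneq x v; first by rewrite orbT.
have ttlex := le _ _ ttx.
have ux : u \in d x := subsetP (good_nest gd (vin tt) ttx ttlex) _ utt'.
have := tmin x; rewrite /P (tle_trans utt ttlex) xv nxv ux => /(_ isT) dle.
have [e|ne] := eqVneq tt x; first by rewrite ?e ?eqxx.
by exfalso; have := tle_lt ttlex ne; rewrite ltnNge => /negP; apply.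
Qed.

Lemma step_loss d v c : good d -> p c = v -> c != v -> c \in Pop p d v ->
  exists tt, [/\ tle tt c, tt != c, tt \in d v & tt \notin Pop p d v].
Proof.
move=> gd pc ncv cP; have [vin le cl nest] := gd.
have cv : c \in d v := Pop_sub cP.
have tlc : toplev d v c.
  apply/and3P; split => //; apply/forallP => x; apply/implyP => /andP [cx xv].
  have xpc : tle x (p c) by rewrite pc.
  by case: (between_par (le _ _ cx) xpc) => ->; rewrite ?pc eqxx ?orbT.
pose P x := tle x c && toplev d v x.
have Pc : P c by rewrite /P tle_refl.
case: (@arg_maxnP _ c P depth Pc) => tt /andP [ttc tlt] tmax.
have [ttv nttv _] := and3P tlt.
have comp : forall y, y \in d v -> tle y tt -> y \in d tt.
  move=> y yv ytt.
  have nyv : y != v.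
    apply/eqP => e; subst y; move: ncv; rewrite (tle_anti (le _ _ cv) (tle_trans ytt ttc)).
    by rewrite eqxx.
  case: (top_exists gd yv nyv) => ty [yty yinty tly].
  have [tyv ntyv _] := and3P tly.
  have [tyc|ntyc] := boolP (tle ty c).
    have := tmax ty; rewrite /P tyc tly => /(_ isT) dle'.
    case/orP: (tle_total yty ytt) => h.
      have [e|ne] := eqVneq ty tt; first by rewrite -e.
      by exfalso; have := tle_lt h ne; rewrite ltnNge => /negP; apply.
    have [e|ne] := eqVneq tt ty; first by rewrite e.
    have ttinty : tt \in d ty := good_up gd yinty ytt h.
    case: (toplevP tlt ttinty (le _ _ tyv)) => e; first by rewrite e eqxx in ne.
    by rewrite e eqxx in ntyv.
  case/orP: (tle_total yty (tle_trans ytt ttc)) => h; first by rewrite h in ntyc.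
  have typc : tle ty (p c) by rewrite pc; exact: le _ _ tyv.
  case: (between_par h typc) => e.
    by rewrite e tle_refl in ntyc.
  by rewrite e pc eqxx in ntyv.
have ttrem := block_removed gd ttv nttv (toplevP tlt) comp (vin tt).
exists tt; split => //.
by apply/eqP => e; rewrite e cP in ttrem.
Qed.

Lemma good_iter k d0 : good d0 -> good (iter k (Pop p) d0).
Proof. by move=> g; elim: k => //= k IH; apply: good_Pop. Qed.

Lemma iter_sub k d0 v x : x \in iter k (Pop p) d0 v -> x \in d0 v.
Proof. by elim: k => //= k IH /Pop_sub /IH. Qed.

Lemma loss k d0 v c : good d0 -> p c = v -> c != v -> c \in iter k (Pop p) d0 v ->
  k <= #|Delta p c :\: iter k (Pop p) d0 v|.
Proof.
move=> g0 pc ncv; elim: k => // k IH /= cP.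
set d := iter k (Pop p) d0 in IH cP *.
have gd : good d := good_iter k g0.
have := IH (Pop_sub cP) => {}IH.
case: (step_loss gd pc ncv cP) => tt [ttc _ ttv ttP].
apply: leq_ltn_trans IH _; apply: proper_card; apply/properP; split.
  apply/subsetP => y; rewrite !inE => /andP [yP yc]; rewrite yc andbT.
  by apply: contra yP; apply: Pop_sub.
by exists tt; rewrite !inE ?ttP ?ttv ?ttc.
Qed.

Lemma loss_path k d0 v c u : good d0 -> p c = v -> c != v -> u \in iter k (Pop p) d0 v ->
  tle u c -> k + (depth u - depth c).+1 <= #|Delta p c|.
Proof.
move=> g0 pc ncv uv uc.
set d := iter k (Pop p) d0 in uv *.
have gd : good d := good_iter k g0.
have cv : c \in d v by apply: good_up gd uv uc _; rewrite -pc tle_par.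
have := loss g0 pc ncv cv; rewrite -/d => h.
rewrite -(cardsID (d v) (Delta p c)) addnC leq_add //.
rewrite -(card_seg uc); apply: subset_leq_card; apply/subsetP => w; rewrite !inE.
case/andP => uw wc; rewrite wc /=; apply: good_up gd uv uw _.
by apply: tle_trans wc _; rewrite -pc tle_par.
Qed.


Lemma arith1 a b c f k : k <= a - b + f -> c < b -> b <= a -> k.+1 <= a - c + f.
Proof. lia. Qed.
Lemma arith2 a c : c <= a -> 0 < c -> a - c.-1 = (a - c).+1.
Proof. lia. Qed.
Lemma arith3 k a b cc f1 f2 D : k <= a - b + f1 -> f1 <= f2 -> k.+1 + (b - cc).+1 <= D ->
  b <= a -> cc <= b ->
  k.+1 <= a - b + (if f2 + 1 <= D - (a - cc) - 1 then f2 + 1 else f2).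
Proof. case: ifP => H; lia. Qed.

Lemma fseq_mono l i j : i <= j -> fseq p l i <= fseq p l j.
Proof.
move=> /subnK <-; elim: (j - i) => // n IH; rewrite addSn /=.
by case: ifP => _; rewrite ?IH // (leq_trans IH) // leq_addr.
Qed.

Lemma main k d0 : good d0 -> forall v u, u \in iter k (Pop p) d0 v -> u != v ->
  exists l, [/\ is_leaf p l, tle l u &
    k <= (depth l - depth u) + fseq p l (depth l - depth v)].
Proof.
move=> g0; elim: k => [|k IH] v u uv nuv.
  by case: (leaf_below u) => l ll lu; exists l.
have uP : u \in Pop p (iter k (Pop p) d0) v by [].
set d := iter k (Pop p) d0 in IH uP.
have gd : good d := good_iter k g0.
have [vin le cl nest] := gd.
have uk : u \in d v := Pop_sub uP.
have uvle : tle u v := le _ _ uk.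
case: (pickP (fun y => [&& y \in d v, tle y u & y != u])) => [y /and3P [yv yu nyu]|noy].
  have nyv : y != v.
    apply/eqP => e; subst y; move: nuv; rewrite (tle_anti uvle yu) eqxx //.
  case: (IH v y yv nyv) => l [ll ly hk].
  exists l; split => //; first exact: tle_trans ly yu.
  exact: arith1 hk (tle_lt yu nyu) (tle_depth ly).
case: (top_exists gd uk nuv) => tt [utt uintt tlt].
have [ttv nttv _] := and3P tlt.
have [comp|ncomp] := boolP [forall y, (y \in d v) && tle y tt ==> (y \in d tt)].
  have := block_removed gd ttv nttv (toplevP tlt).
  have comp' : forall y, y \in d v -> tle y tt -> y \in d tt.
    by move=> y h1 h2; move/forallP: comp => /(_ y); rewrite h1 h2.
  by move=> /(_ comp' u uintt); rewrite uP.
have nttu : tt != u.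
  apply/eqP => e; subst tt.
  case/forallPn: ncomp => y; rewrite negb_imply => /andP [/andP [yv yu] nyu].
  have nyu' : y != u by apply: contra nyu => /eqP ->; apply: vin.
  by have := noy y; rewrite yv yu nyu'.
have nutt : u != tt by rewrite eq_sym.
case: (IH tt u uintt nutt) => l [ll lu hk].
case: (child_exists uvle nuv) => c [uc pc ncv].
have ttc : tle tt c.
  case/orP: (tle_total utt uc) => // h.
  have ttpc : tle tt (p c) by rewrite pc; apply: le.
  case: (between_par h ttpc) => e; first by rewrite -e tle_refl.
  by rewrite e pc eqxx in nttv.
have L := loss_path g0 pc ncv uv uc.
have lc : tle l c := tle_trans lu uc.
have hc := heightC_depth lc.
have ic := tle_iter lc.
have dvc : depth v = (depth c).-1 by rewrite -pc depth_par.
have dcl := tle_depth lc.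
have dcpos : 0 < depth c.
  by have := @tle_lt c (p c) (tle_par c); rewrite pc => /(_ ncv) h; apply: leq_ltn_trans h.
have e1 : depth l - depth v = (depth l - depth c).+1.
  by rewrite dvc arith2.
have mono := fseq_mono l (leq_sub2l (depth l) (tle_depth ttc)).
have dlu := tle_depth lu.
have duc := tle_depth uc.
exists l; split => //.
rewrite e1 /= ic /bC hc.
exact: arith3 hk mono L dlu duc.
Qed.


Definition Dstar v (x : Tstar p v) : nat :=
  match x with inl y => depth y | inr (existT l i) => depth l + i + 1 end.

Lemma Dstar_par v x : Dstar (@par_star _ p v x) = (Dstar x).-1.
Proof.
case: x => [y|[l [[|n] H]]] /=; first by rewrite depth_par.
  by rewrite addn0 addn1.
by rewrite !addn1 addnS.
Qed.

Lemma iter_star_inl v n x : iter n (@par_star _ p v) (inl x) = inl (iter n p x).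
Proof. by elim: n => //= n ->. Qed.

Lemma iter_star_inr v l i (H : i < ext p v l) :
  iter i.+1 (@par_star _ p v) (inr (existT (fun l => 'I_(ext p v l)) l (Ordinal H))) = inl l.
Proof. by elim: i H => // i IH H; rewrite iterSr; exact: IH. Qed.

Lemma height_lb v u l : tle l u -> tle u v -> u != v ->
  depth l - depth u + ext p v l <= height (@par_star _ p v) (inl u).
Proof.
move=> lu uv nuv.
have Dpos : 0 < depth u by have := tle_lt uv nuv; apply: leq_ltn_trans.
have cl : fconnect (@par_star _ p v) (inl l) (inl u).
  by rewrite -(tle_iter lu) -iter_star_inl; apply: fconnect_iter.
suff [w [fw Dw]] : exists w : Tstar p v,
    fconnect (@par_star _ p v) w (inl u) /\ Dstar w = depth l + ext p v l.
  rewrite /height; apply: leq_trans _ (@leq_bigmax_cond _ _ (fun w => dist (@par_star _ p v) w (inl u)) w fw).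
  rewrite (dist_depth (@Dstar_par v) fw) //= Dw.
  by have := tle_depth lu; lia.
case e: (ext p v l) => [|e'].
  by exists (inl l); rewrite addn0.
have H : e' < ext p v l by rewrite e.
exists (inr (existT (fun l => 'I_(ext p v l)) l (Ordinal H))); split => /=.
  apply: connect_trans cl; rewrite -(iter_star_inr H); exact: fconnect_iter.
by rewrite addn1 addnS.
Qed.

End TreeFacts.

Theorem proposition3p3 (T : finType) (t : rtree T) (k : nat)
  (d : {ffun T -> {set T}}) :
  in_Popk (par t) k d ->
  forall v u : T, u \in d v -> rank_ge (rk (par t) v u) k.
Proof.
case=> d0 [o0 ->] v u uv.
have g0 := orn_good (t:=t) o0.
have [_ le _ _] := g0.
have ule : tle (par t) u v := le v u (iter_sub uv).
rewrite /rk ule /=; case: eqP => [_ //|/eqP nuv] /=.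
case: (main g0 uv nuv) => l [ll lu hk].
apply: leq_trans hk _.
have lv := tle_trans lu ule.
have := height_lb lu ule nuv.
by rewrite /ext ll lv /= /fC heightC_depth.
Qed.
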